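(* Let $\mathbb{F}_q$ be a finite field. For any sets $\mathcal{A},\mathcal{B},\mathcal{C}\subseteq\mathbb{F}_q^*$ with cardinalities $A,B,C$ and any nontrivial multiplicative character $\chi$ of $\mathbb{F}_q$, $$|T_\chi(\mathcal{A},\mathcal{B},\mathcal{C})|\ll A^{1/2}\,\mathrm{E}(\mathcal{B}^{-1})^{1/4}\,\mathrm{E}(\mathcal{C}^{-1})^{1/4}\,q^{1/2}+A^{1/2}BC,$$ with an absolute implied constant.
   Context: $T_\chi(\mathcal{A},\mathcal{B},\mathcal{C})=\sum_{a\in\mathcal{A}}\sum_{b\in\mathcal{B}}\sum_{c\in\mathcal{C}}\chi(ab+ac+bc)$, with $\chi(0)=0$. For $\mathcal{U}\subseteq\mathbb{F}_q^*$, $\mathcal{U}^{-1}=\{u^{-1}:u\in\mathcal{U}\}$ and $\mathrm{E}(\mathcal{U})=\#\{(u_1,u_2,u_3,u_4)\in\mathcal{U}^4:u_1+u_2=u_3+u_4\}$. *)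

(* Defs.v *)
From mathcomp Require Import all_boot all_order all_algebra all_field.
Set Implicit Arguments. Unset Strict Implicit. Unset Printing Implicit Defensive.
Import Order.TTheory GRing.Theory Num.Theory.
Local Open Scope ring_scope.

(* A multiplicative character of F, extended by chi(0) = 0:
   a homomorphism F^* -> C^* (values nonzero since chi 1 = 1), with chi 0 = 0. *)
Definition mult_char (F : finFieldType) (chi : F -> algC) : Prop :=
  [/\ chi 0 = 0, chi 1 = 1 & forall x y : F, chi (x * y) = chi x * chi y].

Definition nontrivial_char (F : finFieldType) (chi : F -> algC) : Prop :=
  exists x : F, x != 0 /\ chi x != 1.

Definition Tchi (F : finFieldType) (chi : F -> algC) (A B C : {set F}) : algC :=
  \sum_(a in A) \sum_(b in B) \sum_(c in C) chi (a * b + a * c + b * c).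

Definition set_inv (F : finFieldType) (U : {set F}) : {set F} :=
  [set u^-1 | u in U].

Definition energy (F : finFieldType) (U : {set F}) : nat :=
  #|[set u : (F * F) * (F * F) |
      [&& u.1.1 \in U, u.1.2 \in U, u.2.1 \in U, u.2.2 \in U &
          u.1.1 + u.1.2 == u.2.1 + u.2.2]]|.

(* Main.v *)
Require Import Defs.
From mathcomp Require Import all_boot all_order all_algebra all_field.
From mathcomp Require Import ring.
Import Order.TTheory GRing.Theory Num.Theory.
Local Open Scope ring_scope.

Section Char.
Variables (F : finFieldType) (chi : F -> algC).
Hypothesis hchi : mult_char chi.
Hypothesis hnt : nontrivial_char chi.

Lemma chi0 : chi 0 = 0. Proof. by case: hchi. Qed.
Lemma chi1 : chi 1 = 1. Proof. by case: hchi. Qed.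
Lemma chiM x y : chi (x * y) = chi x * chi y. Proof. by case: hchi. Qed.

Lemma chiX x n : chi (x ^+ n) = chi x ^+ n.
Proof. elim: n => [|n IH]; first by rewrite !expr0 chi1. by rewrite !exprS chiM IH. Qed.

Lemma chi_inv [x] : x != 0 -> chi x * chi x^-1 = 1.
Proof. by move=> nx; rewrite -chiM mulfV // chi1. Qed.

Lemma chi_neq0 [x] : x != 0 -> chi x != 0.
Proof. move=> nx; apply/eqP => h; have := chi_inv nx; rewrite h mul0r. move/eqP; by rewrite eq_sym oner_eq0. Qed.

Lemma norm_chi [x] : x != 0 -> `|chi x| = 1.
Proof.
move=> nx.
have gt1 := finNzRing_gt1 F.
have h : chi x ^+ #|F| = chi x by rewrite -chiX expf_card.
have h2 : chi x ^+ #|F|.-1 = 1.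
  apply: (mulfI (chi_neq0 nx)); rewrite mulr1 -exprS prednK //; exact: ltnW.
apply/eqP; rewrite -(@pexpr_eq1 _ _ #|F|.-1) ?normr_ge0 //.
  by rewrite -normrX h2 normr1.
by rewrite -ltnS prednK // ltnW.
Qed.

Lemma norm_chi_le1 x : `|chi x| <= 1.
Proof. case: (eqVneq x 0) => [->|nx]; first by rewrite chi0 normr0 ler01. by rewrite norm_chi. Qed.

Lemma conj_chi x : (chi x)^* = chi x^-1.
Proof.
case: (eqVneq x 0) => [->|nx]; first by rewrite invr0 chi0 conjC0.
have h : chi x^-1 = (chi x)^-1.
  apply: (mulfI (chi_neq0 nx)); rewrite chi_inv // mulfV //; exact: chi_neq0.
by rewrite h invC_norm norm_chi // expr1n invr1 mul1r.
Qed.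

Lemma sum_chi : \sum_x chi x = 0.
Proof.
case: hnt => x0 [nx0 c1].
have e : \sum_x chi x = chi x0 * \sum_x chi x.
  rewrite mulr_sumr (reindex_inj (mulfI nx0)) /=.
  by apply: eq_bigr => x _; rewrite chiM.
apply/eqP; move/eqP: e; rewrite -subr_eq0 -{1}(mul1r (\sum_x chi x)) -mulrBl mulf_eq0.
by rewrite subr_eq0 eq_sym (negbTE c1).
Qed.

Lemma sum_chi_aff s t : s != 0 -> \sum_a chi (a * s + t) = 0.
Proof.
move=> ns.
have inj : injective (fun a => a * s + t).
  by move=> a b /addIr /(mulIf ns).
transitivity (\sum_x chi x); last exact: sum_chi.
by rewrite [RHS](reindex_inj inj).
Qed.

Lemma orth t t' : t != t' -> \sum_a chi (a + t) * (chi (a + t'))^* = -1.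
Proof.
move=> ntt.
set d := t - t'.
have nd : d != 0 by rewrite subr_eq0.
have inj : injective (fun a => a - t') by move=> a b /addIr.
rewrite (reindex_inj inj) /=.
have e : forall a, chi (a - t' + t) * (chi (a - t' + t'))^*
     = chi (1 + d * a^-1) - (a == 0)%:R.
  move=> a; rewrite subrK conj_chi -chiM.
  case: (eqVneq a 0) => [->|na].
    by rewrite invr0 !mulr0 addr0 chi1 chi0 subrr.
  rewrite subr0 /d; congr chi.
  by rewrite -addrA (addrC (-t')) mulrDl mulfV.
rewrite (eq_bigr _ (fun a _ => e a)) sumrB.
have inj2 : injective (fun a => d * a^-1).
  by move=> a b /(mulfI nd) /invr_inj.
rewrite (reindex_inj inj2) /=.
have -> : \sum_a chi (1 + d * (d * a^-1)^-1) = \sum_a chi (a * 1 + 1).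
  apply: eq_bigr => a _; rewrite invfM invrK mulrA mulfV // mul1r mulr1 addrC //.
rewrite sum_chi_aff ?oner_eq0 // sub0r.
rewrite (bigD1 0) //= eqxx big1 ?addr0 // => a /negbTE -> //.
Qed.

Lemma Maff s p s' p' : p != 0 -> p' != 0 -> s / p != s' / p' ->
  `|\sum_a chi (a * s + p) * (chi (a * s' + p'))^*| <= 1.
Proof.
move=> np np' nr.
case: (eqVneq s 0) => [s0|ns]; case: (eqVneq s' 0) => [s0'|ns'].
- by move: nr; rewrite s0 s0' !mul0r eqxx.
- rewrite s0; under eq_bigr => a _ do rewrite mulr0 add0r.
  by rewrite -mulr_sumr -rmorph_sum sum_chi_aff // rmorph0 mulr0 normr0 ler01.
- rewrite s0'; under eq_bigr => a _ do rewrite mulr0 add0r.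
  by rewrite -mulr_suml sum_chi_aff // mul0r normr0 ler01.
- have e : forall a u v : F, u != 0 -> chi (a * u + v) = chi u * chi (a + v / u).
    by move=> a u v nu; rewrite -chiM; congr chi; field.
  under eq_bigr do rewrite (e _ _ _ ns) (e _ _ _ ns') rmorphM /= mulrACA.
  have ntt : p / s != p' / s'.
    by apply: contra nr => /eqP h; apply/eqP; rewrite -[s / p]invf_div h invf_div.
  rewrite -mulr_sumr orth // normrM normrN normr1 mulr1 normrM norm_conjC.
  by rewrite !norm_chi // mulr1.
Qed.

Definition rr (b c : F) := b^-1 + c^-1.

Lemma Mbound b c b' c' : b != 0 -> c != 0 -> b' != 0 -> c' != 0 ->
  `|\sum_a chi (a * b + a * c + b * c) * (chi (a * b' + a * c' + b' * c'))^*|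
    <= #|F|%:R * (rr b c == rr b' c')%:R + 1.
Proof.
move=> nb nc nb' nc'.
case: (eqVneq (rr b c) (rr b' c')) => [_|nr].
  rewrite mulr1; apply: le_trans (ler_norm_sum _ _ _) _.
  apply: (@le_trans _ _ (\sum_(a : F) 1)).
    apply: ler_sum => a _; rewrite normrM norm_conjC.
    by apply: mulr_ile1; rewrite ?normr_ge0 ?norm_chi_le1.
  by rewrite sumr_const lerDl ler01.
rewrite mulr0 add0r.
have e : forall a x y : F, a * x + a * y + x * y = a * (x + y) + x * y.
  by move=> a x y; rewrite mulrDr.
under eq_bigr do rewrite !e.
have er : forall x y, x != 0 -> y != 0 -> rr x y = (x + y) / (x * y).
  move=> x y nx ny; rewrite /rr; field; by rewrite nx ny.
apply: Maff; rewrite ?mulf_neq0 //.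
by rewrite -er // -er.
Qed.
End Char.

Lemma CS (I : finType) (P : pred I) (x y : I -> algC) :
  (forall i, 0 <= x i) -> (forall i, 0 <= y i) ->
  (\sum_(i | P i) x i * y i) ^+ 2 <=
    (\sum_(i | P i) x i ^+ 2) * (\sum_(i | P i) y i ^+ 2).
Proof.
move=> hx hy.
have H : 0 <= \sum_(i | P i) \sum_(j | P j) (x i * y j - x j * y i) ^+ 2.
  apply: sumr_ge0 => i _; apply: sumr_ge0 => j _; apply: real_exprn_even_ge0 => //.
  by rewrite realB // ger0_real // mulr_ge0.
have e : forall i j, (x i * y j - x j * y i) ^+ 2 =
   x i ^+ 2 * y j ^+ 2 + x j ^+ 2 * y i ^+ 2 - 2 * ((x i * y i) * (x j * y j)).
  by move=> i j; ring.
have e1 : \sum_(i | P i) \sum_(j | P j) x i ^+ 2 * y j ^+ 2 =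
   (\sum_(i | P i) x i ^+ 2) * (\sum_(i | P i) y i ^+ 2) by rewrite big_distrlr.
have e2 : \sum_(i | P i) \sum_(j | P j) x j ^+ 2 * y i ^+ 2 =
   (\sum_(i | P i) x i ^+ 2) * (\sum_(i | P i) y i ^+ 2).
  by rewrite mulrC big_distrlr; apply: eq_bigr => i _; apply: eq_bigr => j _; rewrite mulrC.
have e3 : \sum_(i | P i) \sum_(j | P j) 2 * ((x i * y i) * (x j * y j)) =
   2 * (\sum_(i | P i) x i * y i) ^+ 2.
  by rewrite expr2 big_distrlr mulr_sumr; apply: eq_bigr => i _; rewrite mulr_sumr.
have E : \sum_(i | P i) \sum_(j | P j) (x i * y j - x j * y i) ^+ 2 =
   2 * ((\sum_(i | P i) x i ^+ 2) * (\sum_(i | P i) y i ^+ 2)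
        - (\sum_(i | P i) x i * y i) ^+ 2).
  under eq_bigr do under eq_bigr do rewrite e.
  under eq_bigr do rewrite sumrB big_split.
  rewrite sumrB big_split /= e1 e2 e3. change (GRing.add ?a ?b) with (a + b). ring.
by move: H; rewrite E pmulr_rge0 // subr_ge0.
Qed.

Lemma sum_ind_eq (T : finType) (x y : T) :
  \sum_w (((x == w)%:R : algC) * (y == w)%:R) = (x == y)%:R.
Proof.
rewrite (bigD1 x) //= eqxx mul1r big1 ?addr0; first by rewrite eq_sym.
by move=> w /negbTE; rewrite eq_sym => ->; rewrite mul0r.
Qed.

Section Comb.
Variable F : finFieldType.

Definition Q (X Y : {set F}) : algC :=
  \sum_x \sum_y \sum_x' \sum_y'
    ((x \in X)%:R * (y \in Y)%:R * (x' \in X)%:R * (y' \in Y)%:R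
      * (x + y == x' + y')%:R).

Definition D (X : {set F}) (w : F) : algC :=
  \sum_x \sum_x' ((x \in X)%:R * (x' \in X)%:R * (x - x' == w)%:R).

Lemma D_ge0 X w : 0 <= D X w.
Proof. by apply: sumr_ge0 => x _; apply: sumr_ge0 => y _; rewrite !mulr_ge0 ?ler0n. Qed.

Lemma QD X Y : \sum_w D X w * D Y w = Q X Y.
Proof.
have DY : forall w, D Y w = \sum_y \sum_y' ((y \in Y)%:R * (y' \in Y)%:R * (y' - y == w)%:R).
  move=> w; rewrite /D exchange_big; apply: eq_bigr => y _; apply: eq_bigr => y' _.
  by rewrite (mulrC (y' \in Y)%:R).
under eq_bigr => w _ do rewrite DY /D mulr_suml.
under eq_bigr => w _ do under eq_bigr => x _ do rewrite mulr_suml.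
under eq_bigr => w _ do under eq_bigr => x _ do under eq_bigr => x' _ do rewrite mulr_sumr.
under eq_bigr => w _ do under eq_bigr => x _ do under eq_bigr => x' _ do
  under eq_bigr => y _ do rewrite mulr_sumr.
rewrite [LHS]exchange_big; apply: eq_bigr => x _.
rewrite [LHS]exchange_big [RHS]exchange_big; apply: eq_bigr => x' _.
rewrite [LHS]exchange_big; apply: eq_bigr => y _.
rewrite [LHS]exchange_big; apply: eq_bigr => y' _.
have -> : \sum_w ((x \in X)%:R * (x' \in X)%:R * (x - x' == w)%:R *
     ((y \in Y)%:R * (y' \in Y)%:R * (y' - y == w)%:R)) =
   (x \in X)%:R * (x' \in X)%:R * ((y \in Y)%:R * (y' \in Y)%:R) *
     \sum_w (((x - x' == w)%:R : algC) * (y' - y == w)%:R).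
  rewrite mulr_sumr; apply: eq_bigr => w _; ring.
rewrite sum_ind_eq.
have -> : (x - x' == y' - y) = (x + y == x' + y').
  rewrite -subr_eq0 -[RHS]subr_eq0; congr (_ == 0); ring.
ring.
Qed.

Lemma sum_pair (T1 T2 : finType) (G : T1 * T2 -> algC) :
  \sum_u G u = \sum_a \sum_b G (a, b).
Proof. by rewrite [RHS]pair_bigA; apply: eq_bigr => -[a b]. Qed.

Lemma energyQ (U : {set F}) : (energy U)%:R = Q U U.
Proof.
rewrite /energy -sum1_card natr_sum big_mkcond /=.
rewrite sum_pair; under eq_bigr => p _ do rewrite sum_pair.
rewrite sum_pair; apply: eq_bigr => a _; apply: eq_bigr => b _.
apply: eq_bigr => c _; apply: eq_bigr => d _.
rewrite inE /=.
by case: (a \in U); case: (b \in U); case: (c \in U); case: (d \in U);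
   case: (a + b == c + d); rewrite /= ?mul0r ?mulr0 ?mul1r ?mulr1.
Qed.

Lemma mem_set_inv (B : {set F}) u : (u \in set_inv B) = (u^-1 \in B).
Proof.
apply/imsetP/idP => [[b hb ->]|h]; first by rewrite invrK.
by exists u^-1; rewrite ?invrK.
Qed.

Lemma sum_setX (B C : {set F}) (G : F * F -> algC) :
  \sum_(x in setX B C) G x = \sum_b \sum_c (b \in B)%:R * (c \in C)%:R * G (b, c).
Proof.
rewrite big_mkcond sum_pair; apply: eq_bigr => b _; apply: eq_bigr => c _.
by rewrite in_setX; case: (b \in B); case: (c \in C); rewrite ?mul1r ?mul0r.
Qed.

Lemma N_Q (B C : {set F}) :
  \sum_(x in setX B C) \sum_(y in setX B C)
     ((x.1^-1 + x.2^-1 == y.1^-1 + y.2^-1)%:R : algC) = Q (set_inv B) (set_inv C).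
Proof.
rewrite sum_setX; under eq_bigr do under eq_bigr do rewrite sum_setX /=.
rewrite /Q [LHS](reindex_inj invr_inj) /=; apply: eq_bigr => u _.
rewrite [LHS](reindex_inj invr_inj) /=; apply: eq_bigr => v _.
rewrite mulr_sumr [LHS](reindex_inj invr_inj) /=; apply: eq_bigr => u' _.
rewrite mulr_sumr [LHS](reindex_inj invr_inj) /=; apply: eq_bigr => v' _.
rewrite !invrK -!mem_set_inv; ring.
Qed.

Lemma N_bound (B C : {set F}) :
  (\sum_(x in setX B C) \sum_(y in setX B C)
     ((x.1^-1 + x.2^-1 == y.1^-1 + y.2^-1)%:R : algC)) ^+ 2
  <= (energy (set_inv B))%:R * (energy (set_inv C))%:R.
Proof.
rewrite N_Q !energyQ -!QD.
have := @CS _ (fun _ => true) (D (set_inv B)) (D (set_inv C)) (D_ge0 _) (D_ge0 _).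
by rewrite !(eq_bigr _ (fun w _ => expr2 _)).
Qed.
End Comb.

Theorem lemma4p2 :
  exists K : algC, 0 < K /\
  forall (F : finFieldType) (chi : F -> algC) (A B C : {set F}),
    0 \notin A -> 0 \notin B -> 0 \notin C ->
    mult_char chi -> nontrivial_char chi ->
    `|Tchi chi A B C| <=
      K * (sqrtC (#|A|%:R) * sqrtC (sqrtC ((energy (set_inv B))%:R))
             * sqrtC (sqrtC ((energy (set_inv C))%:R)) * sqrtC (#|F|%:R)
           + sqrtC (#|A|%:R) * #|B|%:R * #|C|%:R).
Proof.
exists 1; split; first exact: ltr01.
move=> F chi A B C hA hB hC hchi hnt.
rewrite mul1r.
set q : algC := #|F|%:R.
pose g a := \sum_(x in setX B C) chi (a * x.1 + a * x.2 + x.1 * x.2).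
have eT : Tchi chi A B C = \sum_(a in A) g a.
  rewrite /Tchi; apply: eq_bigr => a _; rewrite /g pair_big_dep /=.
  by apply: eq_bigl => -[b c]; rewrite in_setX.
set Sa := \sum_(a in A) `|g a|.
have h1 : `|Tchi chi A B C| <= Sa by rewrite eT ler_norm_sum.
have h2 : Sa ^+ 2 <= #|A|%:R * \sum_(a in A) `|g a| ^+ 2.
  have := @CS _ (fun a => a \in A) (fun a => `|g a|) (fun _ => 1) (fun _ => normr_ge0 _) (fun _ => ler01).
  rewrite (eq_bigr _ (fun a _ => mulr1 _)) (eq_bigr (fun _ => 1) (fun a _ => expr1n _ _)).
  by rewrite sumr_const mulrC.
have h3 : \sum_(a in A) `|g a| ^+ 2 <= \sum_a `|g a| ^+ 2.
  rewrite [X in _ <= X](bigID (fun a => a \in A)) /= lerDl.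
  by apply: sumr_ge0 => a _; apply: exprn_ge0; apply: normr_ge0.
pose M (x y : F * F) := \sum_a chi (a * x.1 + a * x.2 + x.1 * x.2)
      * (chi (a * y.1 + a * y.2 + y.1 * y.2))^*.
have h4 : \sum_a `|g a| ^+ 2 = \sum_(x in setX B C) \sum_(y in setX B C) M x y.
  under eq_bigr => a _ do rewrite normCK /g rmorph_sum mulr_suml.
  under eq_bigr => a _ do under eq_bigr => x _ do rewrite mulr_sumr.
  rewrite exchange_big; apply: eq_bigr => x _.
  by rewrite exchange_big.
have nz : forall (S : {set F}) b, 0 \notin S -> b \in S -> b != 0.
  by move=> S b hS hb; apply/eqP => e; rewrite -e hb in hS.
set N := \sum_(x in setX B C) \sum_(y in setX B C)
     ((x.1^-1 + x.2^-1 == y.1^-1 + y.2^-1)%:R : algC).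
have h5 : \sum_a `|g a| ^+ 2 <= q * N + (#|B|%:R * #|C|%:R) ^+ 2.
  rewrite -[X in X <= _]ger0_norm; last first.
    by apply: sumr_ge0 => a _; apply: exprn_ge0; apply: normr_ge0.
  rewrite h4; apply: le_trans (ler_norm_sum _ _ _) _.
  apply: (@le_trans _ _ (\sum_(x in setX B C) \sum_(y in setX B C)
             (q * ((x.1^-1 + x.2^-1 == y.1^-1 + y.2^-1)%:R) + 1))).
    apply: ler_sum => -[x1 x2]; rewrite in_setX => /andP [hx1 hx2].
    apply: le_trans (ler_norm_sum _ _ _) _.
    apply: ler_sum => -[y1 y2]; rewrite in_setX => /andP [hy1 hy2].
    have := (@Mbound F chi hchi hnt x1 x2 y1 y2 (nz _ _ hB hx1) (nz _ _ hC hx2) (nz _ _ hB hy1) (nz _ _ hC hy2)). by rewrite /rr.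
  rewrite le_eqVlt; apply/orP; left; apply/eqP.
  under eq_bigr do rewrite big_split /=.
  rewrite big_split /=; congr (_ + _).
    by rewrite /N mulr_sumr; apply: eq_bigr => x _; rewrite mulr_sumr.
  rewrite !sumr_const cardsX -mulr_natr natrM expr2.
  by rewrite !mul1r -[X in X = _]mulr_natr natrM.
have h6 := @N_bound F B C.
set EU : algC := (energy (set_inv B))%:R in h6 *.
set EV : algC := (energy (set_inv C))%:R in h6 *.
have N0 : 0 <= N by apply: sumr_ge0 => x _; apply: sumr_ge0 => y _; apply: ler0n.
have EU0 : 0 <= EU by apply: ler0n.
have EV0 : 0 <= EV by apply: ler0n.
set X := sqrtC (sqrtC EU) * sqrtC (sqrtC EV).
have X0 : 0 <= X by rewrite mulr_ge0 // sqrtC_ge0 sqrtC_ge0.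
have hX : N <= X ^+ 2.
  rewrite exprMn !sqrtCK -sqrtCM ?nnegrE //.
  rewrite -(sqrCK N0) ler_sqrtC ?nnegrE ?mulr_ge0 ?exprn_ge0 //.
set a : algC := #|A|%:R.
set b : algC := #|B|%:R.
set c : algC := #|C|%:R.
have a0 : 0 <= a by apply: ler0n.
have b0 : 0 <= b by apply: ler0n.
have c0 : 0 <= c by apply: ler0n.
have q0 : 0 <= q by apply: ler0n.
have -> : sqrtC a * sqrtC (sqrtC EU) * sqrtC (sqrtC EV) * sqrtC q + sqrtC a * b * c
   = sqrtC a * (X * sqrtC q + b * c) by rewrite /X; ring.
set R := sqrtC a * (X * sqrtC q + b * c).
have R0 : 0 <= R by rewrite mulr_ge0 ?sqrtC_ge0 // addr_ge0 ?mulr_ge0 ?sqrtC_ge0.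
have Sa0 : 0 <= Sa by apply: sumr_ge0 => i _; apply: normr_ge0.
apply: le_trans h1 _.
rewrite -(@ler_pXn2r _ 2) ?nnegrE //.
have eR : R ^+ 2 = sqrtC a ^+ 2 * (X ^+ 2 * sqrtC q ^+ 2 + 2 * (X * sqrtC q * (b * c)) + (b * c) ^+ 2).
  by rewrite /R; ring.
rewrite eR !sqrtCK.
apply: le_trans h2 _; apply: ler_wpM2l => //.
apply: le_trans h3 _; apply: le_trans h5 _.
apply: lerD => //.
apply: (@le_trans _ _ (X ^+ 2 * q)).
  by rewrite mulrC ler_wpM2r.
by rewrite lerDl mulr_ge0 ?mulr_ge0 ?sqrtC_ge0.
Qed.
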